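(* Let $S_{r,N}$ be an atomic exponential Puiseux semiring. The following are equivalent: (1) $r\in\mathbb{N}$; (2) $S_{r,N}$ is locally tame; (3) $S_{r,N}$ is globally tame.
   Context: $\mathbb{N}=\{0,1,2,\dots\}$. A numerical monoid $N$ is an additive submonoid of $\mathbb{N}$ with finite complement. For $r\in\mathbb{Q}_{>0}$, $S_{r,N}$ is the additive submonoid of $\mathbb{Q}_{\ge0}$ generated by $\{r^k:k\in N\}$. For an atomic monoid $M$ with factorization sets $\mathsf{Z}(y)$ and factorization monoid $\mathsf{Z}(M)$ (free commutative monoid on the atoms), with $\mathsf{d}(z,z')=\max(|z|,|z'|)-|\gcd(z,z')|$: for an atom $a$, the tame degree $\mathsf{t}(a)$ is the smallest $n\in\mathbb{N}\cup\{\infty\}$ such that for every $y\in M$ with $\mathsf{Z}(y)\cap(a+\mathsf{Z}(M))\neq\emptyset$ and every $z\in\mathsf{Z}(y)$ there exists $z'\in\mathsf{Z}(y)\cap(a+\mathsf{Z}(M))$ (a factorization containing $a$) with $\mathsf{d}(z,z')\le n$; $\mathsf{t}(M)=\sup_a\mathsf{t}(a)$. $M$ is locally tame if $\mathsf{t}(a)<\infty$ for every atom $a$, and globally tame if $\mathsf{t}(M)<\infty$. *)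

(* Defs.v *)
From mathcomp Require Import all_boot all_order all_algebra.
Set Implicit Arguments. Unset Strict Implicit. Unset Printing Implicit Defensive.
Import Order.TTheory GRing.Theory Num.Theory.
Local Open Scope ring_scope.

Definition numerical_monoid (N : pred nat) : Prop :=
  [/\ (0%N \in N),
      (forall m n : nat, m \in N -> n \in N -> (m + n)%N \in N) &
      (exists b : nat, forall n : nat, (b <= n)%N -> n \in N)].

Definition exp_puiseux (r : rat) (N : pred nat) : rat -> Prop :=
  fun x => exists s : seq nat, all (fun k => k \in N) s /\ x = \sum_(k <- s) r ^+ k.

(* Atoms of a (reduced) submonoid M of Q_{>=0}: the only unit is 0. *)
Definition is_atom (M : rat -> Prop) (a : rat) : Prop :=
  [/\ M a, a != 0 &
      forall b c, M b -> M c -> a = b + c -> b = 0 \/ c = 0].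

(* A factorization (element of the free commutative monoid on the atoms,
   represented as a finite list up to order) of y. *)
Definition is_factorization (M : rat -> Prop) (y : rat) (z : seq rat) : Prop :=
  (forall a, a \in z -> is_atom M a) /\ \sum_(a <- z) a = y.

Definition atomic (M : rat -> Prop) : Prop :=
  forall y, M y -> y != 0 -> exists z, is_factorization M y z.

Definition gcd_len (z z' : seq rat) : nat :=
  (\sum_(a <- undup z) minn (count_mem a z) (count_mem a z'))%N.

Definition fact_dist (z z' : seq rat) : nat :=
  (maxn (size z) (size z') - gcd_len z z')%N.

Definition tame_bound (M : rat -> Prop) (a : rat) (n : nat) : Prop :=
  forall y z, is_factorization M y z ->
    (exists z', is_factorization M y z' /\ a \in z') ->
    exists z', [/\ is_factorization M y z', a \in z' & (fact_dist z z' <= n)%N].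

Definition locally_tame (M : rat -> Prop) : Prop :=
  forall a, is_atom M a -> exists n : nat, tame_bound M a n.

Definition globally_tame (M : rat -> Prop) : Prop :=
  exists n : nat, forall a, is_atom M a -> tame_bound M a n.

(* Main.v *)
Require Import Defs.
From mathcomp Require Import all_boot all_order all_algebra zify ring.
Set Implicit Arguments. Unset Strict Implicit. Unset Printing Implicit Defensive.
Import Order.TTheory GRing.Theory Num.Theory.

Definition Tn (p q : nat) (E : seq nat) (k : nat) : nat :=
  \sum_(e <- E | e <= k) p ^ e * q ^ (k - e).

Lemma Tn_rec p q E k :
  Tn p q E k.+1 = q * Tn p q E k + p ^ k.+1 * count_mem k.+1 E.
Proof.
rewrite /Tn; elim: E => [|e E IH]; first by rewrite !big_nil /=; lia.
rewrite !big_cons IH /=.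
set S := \sum_(_ <- E | _) _.
case: (ltngtP e k.+1) => [hlt|hgt|->].
- have hle : e <= k by [].
  have hne : (e == k.+1) = false by apply/negbTE; rewrite neq_ltn hlt.
  rewrite hle (subSn hle) expnS /=; ring.
- have h2 : (e <= k) = false by apply/negbTE; rewrite -ltnNge ltnW.
  by rewrite h2 /= add0n.
- rewrite ltnn subnn expn0 /=; ring.
Qed.

Lemma Tn_full p q E K : all (fun e => e <= K) E ->
  Tn p q E K = \sum_(e <- E) p ^ e * q ^ (K - e).
Proof.
rewrite /Tn; elim: E => [|e E IH] /=; first by rewrite !big_nil.
by case/andP => he hE; rewrite !big_cons he IH.
Qed.

Lemma Tn_split p q E K k : k <= K ->
  \sum_(e <- E) p ^ e * q ^ (K - e) =
  q ^ (K - k) * Tn p q E k + \sum_(e <- E | k < e) p ^ e * q ^ (K - e).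
Proof.
move=> hk; rewrite /Tn; elim: E => [|e E IH]; first by rewrite !big_nil muln0 addn0.
rewrite !big_cons IH.
case: (leqP e k) => he.
- rewrite mulnDr -addnA; congr (_ + _).
  rewrite mulnCA -expnD; congr (_ * q ^ _); lia.
- by rewrite addnCA.
Qed.

Lemma dvd_high p q E K k :
  p ^ k.+1 %| \sum_(e <- E | k < e) p ^ e * q ^ (K - e).
Proof.
elim: E => [|e E IH]; first by rewrite big_nil dvdn0.
rewrite big_cons; case: ifP => // he.
by apply: dvdn_add => //; apply: dvdn_mulr; apply: dvdn_exp2l.
Qed.

Lemma divL p q E K k S0 : coprime p q -> k <= K ->
  \sum_(e <- E) p ^ e * q ^ (K - e) = S0 -> p ^ k.+1 %| S0 ->
  p ^ k.+1 %| Tn p q E k.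
Proof.
move=> cop hk hS hd.
rewrite (Tn_split p q E hk) in hS.
have : p ^ k.+1 %| q ^ (K - k) * Tn p q E k.
  by rewrite -(dvdn_addr _ (dvd_high p q E K k)) addnC hS.
by rewrite Gauss_dvdr // coprimeXl // coprimeXr.
Qed.

Lemma Tn_ge_term p q E k e : e \in E -> e <= k -> p ^ e * q ^ (k - e) <= Tn p q E k.
Proof.
rewrite /Tn; elim: E => [|x E IH] //; rewrite inE big_cons => /orP [/eqP -> | hE] he.
  by rewrite he leq_addr.
case: ifP => _; last exact: IH.
by apply: leq_trans (IH hE he) _; rewrite leq_addl.
Qed.

Lemma Tn_mono p q E k d : q ^ d * Tn p q E k <= Tn p q E (k + d).
Proof.
elim: d => [|d IH]; first by rewrite expn0 mul1n addn0.
rewrite addnS Tn_rec expnS -mulnA.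
apply: leq_trans (leq_addr _ _); by rewrite leq_mul2l IH orbT.
Qed.

Lemma count_rec E k : count (fun e => e <= k.+1) E = count (fun e => e <= k) E + count_mem k.+1 E.
Proof.
elim: E => [|e E IH] //=; rewrite IH.
case: (ltngtP e k.+1) => [hlt|hgt|->] /=.
- have hle : e <= k by [].
  have hne : (e == k.+1) = false by apply/negbTE; rewrite neq_ltn hlt.
  rewrite hle /=; lia.
- have h2 : (e <= k) = false by apply/negbTE; rewrite -ltnNge ltnW.
  by rewrite h2 /=.
- rewrite ltnn /=; lia.
Qed.

Lemma leq_expb m n e : m <= n -> m ^ e <= n ^ e.
Proof. by move=> h; elim: e => // e IH; rewrite !expnS leq_mul. Qed.

Lemma Tn_le_count p q E k : q <= p -> Tn p q E k <= count (fun e => e <= k) E * p ^ k.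
Proof.
move=> hqp; rewrite /Tn; elim: E => [|e E IH]; first by rewrite big_nil.
rewrite big_cons /=; case: ifP => he.
  rewrite mulnDl mul1n leq_add //.
  by rewrite -{2}(subnKC he) expnD leq_mul2l leq_expb ?orbT.
by [].
Qed.

Lemma Tn_pos p q E k b : 0 < p -> 0 < q -> b \in E -> b <= k -> 0 < Tn p q E k.
Proof.
move=> hp hq hb hk; apply: leq_trans (Tn_ge_term p q hb hk).
by rewrite muln_gt0 !expn_gt0 hp hq.
Qed.

Lemma lower_lt p q E K b j L : coprime p q -> 0 < p -> p < q ->
  all (fun e => e <= K) E -> b + j <= K -> b \in E -> 0 < j ->
  \sum_(e <- E) p ^ e * q ^ (K - e) = L * (p ^ (b + j) * q ^ (K - (b + j))) ->
  q * j + count_mem (b + j) E <= L.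
Proof.
move=> cop hp hpq hE hK hb hj hS.
have hq : 0 < q by apply: leq_trans hpq.
have hdiv : forall i, i < j -> p ^ (b + i).+1 %| Tn p q E (b + i).
  move=> i hi; apply: (divL (S0 := L * (p ^ (b + j) * q ^ (K - (b + j))))) cop _ hS _.
    lia.
  by apply: dvdn_mull; apply: dvdn_mulr; apply: dvdn_exp2l; lia.
have step : forall i, i < j -> i.+1 * p ^ (b + i).+1 <= Tn p q E (b + i).
  elim=> [|i IH] hi.
    by rewrite mul1n; apply: dvdn_leq (hdiv 0 hi); apply: Tn_pos hp hq hb (leq_addr _ _).
  have IH' := IH (ltnW hi).
  case/dvdnP: (hdiv _ hi) => n' hn'.
  have hr := Tn_rec p q E (b + i).
  rewrite addnS in hn' *.
  rewrite hn' in hr.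
  set P := p ^ (b + i).+1 in IH' hr.
  have hP : 0 < P by rewrite expn_gt0 hp.
  rewrite expnS -/P in hr *.
  have h1 : q * i.+1 * P <= n' * (p * P).
    rewrite hr -mulnA; apply: leq_trans (leq_addr _ _); by rewrite leq_mul2l IH' orbT.
  have h2 : q * i.+1 <= n' * p.
    by rewrite -(leq_pmul2r hP) -[n' * p * P]mulnA.
  have h3 : i.+2 <= n' by nia.
  by rewrite hn' expnS -/P leq_mul2r h3 orbT.
case: j hj hK hS hdiv step => // j' _ hK hS hdiv step.
have hT := step j' (ltnSn j').
have hr := Tn_rec p q E (b + j').
have hm := Tn_mono p q E (b + j'.+1) (K - (b + j'.+1)).
rewrite subnKC // (Tn_full _ _ hE) hS addnS hr in hm.
set P := p ^ (b + j').+1 in hT hr hm *.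
have hP : 0 < P by rewrite expn_gt0 hp.
rewrite (_ : L * (P * _) = q ^ (K - (b + j').+1) * (L * P)) in hm; last by ring.
rewrite leq_pmul2l ?expn_gt0 ?hq // in hm.
have : (q * j'.+1 + count_mem (b + j'.+1) E) * P <= L * P.
  rewrite addnS mulnDl; apply: leq_trans hm.
  rewrite [count_mem _ _ * P]mulnC leq_add2r -mulnA leq_mul2l hT orbT //.
by rewrite leq_pmul2r.
Qed.

Lemma lower_gt p q E K b j : coprime p q -> 0 < q -> q < p ->
  all (fun e => e <= K) E -> b + j <= K -> b \in E -> 0 < j ->
  \sum_(e <- E) p ^ e * q ^ (K - e) = q * (p ^ (b + j) * q ^ (K - (b + j))) ->
  q + j <= size E.
Proof.
move=> cop hq hqp hE hK hb hj hS.
have hp : 0 < p by apply: leq_trans hqp.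
have hdiv : forall i, i < j -> p ^ (b + i).+1 %| Tn p q E (b + i).
  move=> i hi; apply: (divL (S0 := q * (p ^ (b + j) * q ^ (K - (b + j))))) cop _ hS _.
    lia.
  by apply: dvdn_mull; apply: dvdn_mulr; apply: dvdn_exp2l; lia.
have hTP : forall i, i < j -> p ^ (b + i).+1 <= Tn p q E (b + i).
  by move=> i hi; apply: dvdn_leq (hdiv i hi); apply: Tn_pos hp hq hb (leq_addr _ _).
pose d := p - q.
have hpd : p = q + d by rewrite /d; lia.
have inv : forall i, i < j -> p * Tn p q E (b + i) + i * d * p ^ (b + i).+1
                             <= p ^ (b + i).+1 * count (fun e => e <= b + i) E.
  elim=> [|i IH] hi.
    rewrite !mul0n addn0 expnS -mulnA leq_mul2l; apply/orP; right.
    by rewrite mulnC; apply: Tn_le_count; apply: ltnW.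
  have IH' := IH (ltnW hi).
  have hT := hTP i (ltnW hi).
  rewrite addnS Tn_rec count_rec.
  set T := Tn p q E (b + i) in IH' hT *.
  set P := p ^ (b + i).+1 in IH' hT *.
  set C := count _ E in IH' *.
  set c := count_mem _ E.
  rewrite expnS -/P.
  have h2 : d * p * P <= d * p * T by rewrite leq_mul2l hT orbT.
  have h1 : p * (p * T + i * d * P) <= p * (P * C) by rewrite leq_mul2l IH' orbT.
  clearbody d T P C c; clear -h1 h2 hpd.
  subst p. nia.
case: j hj hK hS hdiv hTP inv => // j' _ hK hS hdiv hTP inv.
have h := inv j' (ltnSn j').
have hT := hTP j' (ltnSn j').
set T := Tn p q E (b + j') in h hT.
set P := p ^ (b + j').+1 in h hT.
set C := count _ E in h.
have hP : 0 < P by rewrite expn_gt0 hp.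
have hC : C <= size E by apply: count_size.
have : (p + j' * d) * P <= C * P.
  have e1 : p * P <= p * T by rewrite leq_mul2l hT orbT.
  clearbody d T P C; lia.
rewrite leq_pmul2r // => h'.
apply: leq_trans hC; apply: leq_trans h'.
rewrite hpd; nia.
Qed.

Local Open Scope ring_scope.


Lemma term_conv (p q e K : nat) : (0 < q)%N -> (e <= K)%N ->
  ((p%:R / q%:R : rat) ^+ e) * (q ^ K)%:R = (p ^ e * q ^ (K - e))%:R.
Proof.
move=> hq he.
have hq0 : (q%:R : rat) != 0 by rewrite pnatr_eq0 -lt0n.
rewrite expr_div_n natrX -{1}(subnKC he) exprD mulrA divfK ?expf_neq0 //.
by rewrite natrM !natrX.
Qed.

Lemma sum_conv (p q K : nat) (E : seq nat) : (0 < q)%N -> all (fun e => e <= K)%N E ->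
  (\sum_(e <- E) (p%:R / q%:R : rat) ^+ e) * (q ^ K)%:R =
  (\sum_(e <- E) p ^ e * q ^ (K - e))%:R.
Proof.
move=> hq; elim: E => [|e E IH] /=; first by rewrite !big_nil mul0r.
by case/andP => he hE; rewrite !big_cons mulrDl natrD term_conv // IH.
Qed.

Lemma sum_eq_nat (p q K : nat) (E F : seq nat) : (0 < q)%N ->
  all (fun e => e <= K)%N E -> all (fun e => e <= K)%N F ->
  \sum_(e <- E) (p%:R / q%:R : rat) ^+ e = \sum_(e <- F) (p%:R / q%:R : rat) ^+ e ->
  (\sum_(e <- E) p ^ e * q ^ (K - e) = \sum_(e <- F) p ^ e * q ^ (K - e))%N.
Proof.
move=> hq hE hF h; apply/eqP; rewrite -(eqr_nat rat) -!sum_conv // h //.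
Qed.

Lemma le_sumn (E : seq nat) e : e \in E -> (e <= \sum_(x <- E) x)%N.
Proof.
elim: E => [|x E IH] //; rewrite inE big_cons => /orP [/eqP ->|h].
  exact: leq_addr.
by apply: leq_trans (IH h) _; apply: leq_addl.
Qed.

Lemma all_le_K (E : seq nat) m : all (fun e => e <= m + \sum_(x <- E) x)%N E.
Proof. by apply/allP => e he; apply: leq_trans (le_sumn he) (leq_addl _ _). Qed.

Lemma sum_nseq_nat (p q K L m : nat) :
  (\sum_(e <- nseq L m) p ^ e * q ^ (K - e) = L * (p ^ m * q ^ (K - m)))%N.
Proof. by elim: L => [|L IH]; rewrite ?big_nil // /= big_cons IH mulSn. Qed.

Lemma sum_nseq_rat (r : rat) L m : \sum_(e <- nseq L m) r ^+ e = L%:R * r ^+ m.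
Proof. by elim: L => [|L IH]; rewrite ?big_nil ?mul0r // /= big_cons IH mulrSr mulrDl mul1r addrC. Qed.

Lemma sum_ge0 (r : rat) s : 0 < r -> 0 <= \sum_(e <- s) r ^+ e.
Proof. by move=> hr; apply: sumr_ge0 => i _; apply/ltW/exprn_gt0. Qed.

Lemma sum_pos (r : rat) s : 0 < r -> s != [::] -> 0 < \sum_(e <- s) r ^+ e.
Proof.
move=> hr; case: s => [|x s] // _; rewrite big_cons.
by apply: lt_le_trans (exprn_gt0 x hr) _; rewrite lerDl sum_ge0.
Qed.

Lemma term_le_sum (r : rat) s e : 0 < r -> e \in s -> r ^+ e <= \sum_(x <- s) r ^+ x.
Proof.
move=> hr; elim: s => [|x s IH] //; rewrite inE big_cons => /orP [/eqP ->|h].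
  by rewrite lerDl sum_ge0.
by apply: le_trans (IH h) _; rewrite lerDr ltW // exprn_gt0.
Qed.

Lemma atom_shape (r : rat) N a : 0 < r -> is_atom (exp_puiseux r N) a ->
  exists k, k \in N /\ a = r ^+ k.
Proof.
move=> hr [[s [hs ->]] hnz hsp].
case: s hs hnz hsp => [|k s] /=; first by rewrite big_nil eqxx.
case/andP => hk hs _ hsp; exists k; split => //.
case: s hs hsp => [|x s] hs hsp; first by rewrite big_seq1.
have := hsp (r ^+ k) (\sum_(e <- x :: s) r ^+ e).
case.
- by exists [:: k]; rewrite big_seq1 /= hk.
- by exists (x :: s).
- by rewrite big_cons.
- by move/eqP; rewrite gt_eqF // exprn_gt0.
- by move/eqP; rewrite gt_eqF // sum_pos.
Qed.

Lemma fact_shape (r : rat) N z : 0 < r ->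
  (forall a, a \in z -> is_atom (exp_puiseux r N) a) ->
  exists E : seq nat, z = map (fun e => r ^+ e) E.
Proof.
move=> hr; elim: z => [|a z IH] h; first by exists [::].
have [k [_ ->]] := atom_shape hr (h a (mem_head _ _)).
have [E ->] : exists E, z = map (fun e => r ^+ e) E.
  by apply: IH => b hb; apply: h; rewrite inE hb orbT.
by exists (k :: E).
Qed.

Lemma fact_of_list (r : rat) N E :
  (forall k, k \in N -> is_atom (exp_puiseux r N) (r ^+ k)) -> all (fun k => k \in N) E ->
  is_factorization (exp_puiseux r N) (\sum_(e <- E) r ^+ e) (map (fun e => r ^+ e) E).
Proof.
move=> hat hE; split; last by rewrite big_map.
by move=> a /mapP [e he ->]; apply: hat; move/allP: hE; apply.
Qed.

Lemma undup_nseq (T : eqType) L (x : T) : undup (nseq L.+1 x) = [:: x].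
Proof.
elim: L => [|L IH] //=; move: IH => /= IH.
by rewrite inE eqxx /= IH.
Qed.

Lemma gcd_nseq L (x : rat) z : gcd_len (nseq L.+1 x) z = minn L.+1 (count_mem x z).
Proof. by rewrite /gcd_len undup_nseq big_seq1 count_nseq /= eqxx mul1n. Qed.

Lemma cop_dvd1 m n : coprime m n -> (m %| n)%N -> m = 1%N.
Proof.
move=> cop h; have : (m %| gcdn m n)%N by rewrite dvdn_gcd dvdnn h.
by rewrite (eqP cop) dvdn1 => /eqP.
Qed.

Lemma atom_pow (p q : nat) N k : coprime p q -> (2 <= p)%N -> (2 <= q)%N -> k \in N ->
  is_atom (exp_puiseux (p%:R / q%:R) N) ((p%:R / q%:R : rat) ^+ k).
Proof.
move=> cop hp2 hq2 hk.
set r : rat := p%:R / q%:R.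
have hq : (0 < q)%N by apply: leq_trans hq2.
have hp : (0 < p)%N by apply: leq_trans hp2.
have hqr : (0 : rat) < q%:R by rewrite ltr0n.
have hr : 0 < r by rewrite divr_gt0 // ltr0n.
split.
- by exists [:: k]; rewrite big_seq1 /= hk.
- by rewrite gt_eqF // exprn_gt0.
move=> u v [s1 [hs1 ->]] [s2 [hs2 ->]] he.
case: (s1 =P [::]) => [->|n1]; first by left; rewrite big_nil.
case: (s2 =P [::]) => [->|n2]; first by right; rewrite big_nil.
exfalso.
have hu := sum_pos hr (introN eqP n1).
have hv := sum_pos hr (introN eqP n2).
have hlt : forall e, e \in s1 ++ s2 -> r ^+ e < r ^+ k.
  move=> e; rewrite mem_cat => /orP [h|h].
    by apply: le_lt_trans (term_le_sum hr h) _; rewrite he ltrDl.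
  by apply: le_lt_trans (term_le_sum hr h) _; rewrite he ltrDr.
have hsum : \sum_(e <- s1 ++ s2) r ^+ e = \sum_(e <- [:: k]) r ^+ e.
  by rewrite big_cat big_seq1 he.
set E := s1 ++ s2 in hlt hsum.
case: (ltngtP p q) => hpq.
- have hr1 : r < 1 by rewrite ltr_pdivrMr // mul1r ltr_nat.
  have hgt : forall e, e \in E -> (k < e)%N.
    by move=> e /hlt; rewrite ltr_iXn2l.
  set K := (k + \sum_(x <- E) x)%N.
  have hKk : all (fun e => e <= K)%N [:: k] by rewrite /= leq_addr.
  have hnat := sum_eq_nat hq (all_le_K E k) hKk hsum.
  rewrite big_seq1 in hnat.
  have hd : (p ^ k.+1 %| \sum_(e <- E) p ^ e * q ^ (K - e))%N.
    rewrite big_seq; apply: dvdn_sum => e he2.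
    by apply: dvdn_mulr; apply: dvdn_exp2l; apply: hgt.
  rewrite hnat expnS mulnC dvdn_pmul2l ?expn_gt0 ?hp // in hd.
  have := cop_dvd1 (coprimeXr (K - k) cop) hd; lia.
- have hr1 : 1 < r by rewrite ltr_pdivlMr // mul1r ltr_nat.
  have hgt : forall e, e \in E -> (e < k)%N.
    by move=> e /hlt; rewrite ltr_eXn2l.
  have hKE : all (fun e => e <= k)%N E by apply/allP => e /hgt /ltnW.
  have hKk : all (fun e => e <= k)%N [:: k] by rewrite /= leqnn.
  have hnat := sum_eq_nat hq hKE hKk hsum.
  rewrite big_seq1 subnn expn0 muln1 in hnat.
  have hd : (q %| \sum_(e <- E) p ^ e * q ^ (k - e))%N.
    rewrite big_seq; apply: dvdn_sum => e he2.
    by apply: dvdn_mull; apply: dvdn_exp; [rewrite subn_gt0; apply: hgt|].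
  rewrite hnat in hd.
  rewrite coprime_sym in cop; have := cop_dvd1 (coprimeXr k cop) hd; lia.
- subst q; move: cop; rewrite /coprime gcdnn => /eqP; lia.
Qed.

Fixpoint E0 (p q b i : nat) : seq nat :=
  (if i is i'.+1 then nseq (p - q) (b + i') ++ E0 p q b i' else nseq q b)%N.

Lemma E0_sum (p q b i : nat) : (q < p)%N -> (0 < q)%N ->
  \sum_(e <- E0 p q b i) (p%:R / q%:R : rat) ^+ e = q%:R * (p%:R / q%:R) ^+ (b + i).
Proof.
move=> hqp hq; set r : rat := p%:R / q%:R.
have hq0 : (q%:R : rat) != 0 by rewrite pnatr_eq0 -lt0n.
elim: i => [|i IH] /=; first by rewrite sum_nseq_rat addn0.
rewrite big_cat IH sum_nseq_rat /= -mulrDl natrB ?(ltnW hqp) // subrK.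
by rewrite addnS exprS mulrA [_ * r]mulrC /r divfK.
Qed.

Lemma E0_N (p q b i : nat) (N : pred nat) : (forall k, b <= k -> k \in N)%N ->
  all (fun k => k \in N) (E0 p q b i).
Proof.
move=> hb; elim: i => [|i IH] /=.
  by apply/allP => x /nseqP [-> _]; apply: hb.
rewrite all_cat IH andbT; apply/allP => x /nseqP [-> _]; apply: hb; exact: leq_addr.
Qed.

Lemma E0_b (p q b i : nat) : (0 < q)%N -> b \in E0 p q b i.
Proof.
move=> hq; elim: i => [|i IH] /=; first by rewrite mem_nseq hq eqxx.
by rewrite mem_cat IH orbT.
Qed.

Lemma count_pow (r : rat) E m : 0 < r -> r != 1 ->
  count_mem (r ^+ m) (map (fun e => r ^+ e) E) = count_mem m E.
Proof.
move=> hr hr1; rewrite count_map; apply: eq_count => e /=.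
by rewrite (inj_eq (ieexprIn hr hr1)) eq_sym.
Qed.

Lemma mem_pow (r : rat) E b : 0 < r -> r != 1 ->
  r ^+ b \in map (fun e => r ^+ e) E -> b \in E.
Proof.
move=> hr hr1 /mapP [e he h].
by rewrite (ieexprIn hr hr1 h).
Qed.

Lemma not_tame (p q : nat) (N : pred nat) b n : coprime p q -> (2 <= p)%N -> (2 <= q)%N ->
  (forall k, b <= k -> k \in N)%N ->
  ~ tame_bound (exp_puiseux (p%:R / q%:R) N) ((p%:R / q%:R : rat) ^+ b) n.
Proof.
move=> cop hp2 hq2 hb htb.
set r : rat := p%:R / q%:R in htb.
have hq : (0 < q)%N by apply: leq_trans hq2.
have hp : (0 < p)%N by apply: leq_trans hp2.
have hqr : (0 : rat) < q%:R by rewrite ltr0n.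
have hq0 : (q%:R : rat) != 0 by rewrite gt_eqF.
have hr : 0 < r by rewrite divr_gt0 // ltr0n.
have hat : forall k, k \in N -> is_atom (exp_puiseux r N) (r ^+ k).
  by move=> k hk; apply: atom_pow.
set j := n.+1.
set m := (b + j)%N.
have hmN : all (fun k => k \in N) (nseq 1 m) by rewrite /= hb // leq_addr.
have allm : forall L, all (fun k => k \in N) (nseq L m).
  by move=> L; apply/allP => x /nseqP [-> _]; apply: hb; apply: leq_addr.
set K := fun E : seq nat => (m + \sum_(x <- E) x)%N.
have allK : forall E L, all (fun e => e <= K E)%N (nseq L m).
  by move=> E L; apply/allP => x /nseqP [-> _]; apply: leq_addr.
case: (ltngtP p q) => hpq.
-
  have hr1 : r != 1 by rewrite lt_eqF // ltr_pdivrMr // mul1r ltr_nat.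
  set L := (q ^ j)%N.
  have hy : \sum_(e <- nseq L m) r ^+ e = \sum_(e <- nseq (p ^ j) b) r ^+ e.
    rewrite !sum_nseq_rat /m exprD mulrA mulrAC /L !natrX -exprMn [_ * r]mulrC /r divfK //.
  have hbN : all (fun k => k \in N) (nseq (p ^ j) b).
    by apply/allP => x /nseqP [-> _]; apply: hb.
  have hz := fact_of_list hat (allm L).
  have hz' := fact_of_list hat hbN.
  rewrite -hy in hz'.
  have hain : r ^+ b \in map (fun e => r ^+ e) (nseq (p ^ j) b).
    by apply: map_f; rewrite mem_nseq expn_gt0 hp eqxx.
  have [z' [[hza hzs] ha hd]] := htb _ _ hz (ex_intro _ _ (conj hz' hain)).
  have [E hE] := fact_shape hr hza; subst z'.
  have hbE := mem_pow hr hr1 ha.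
  rewrite big_map in hzs.
  have hnat := sum_eq_nat hq (all_le_K E m) (allK E L) hzs.
  rewrite sum_nseq_nat in hnat.
  have hlow := lower_lt cop hp hpq (all_le_K E m) (leq_addr _ _) hbE (ltn0Sn n) hnat.
  move: hd; rewrite /fact_dist map_nseq.
  have -> : L = (L.-1).+1 by rewrite prednK // expn_gt0 hq.
  rewrite gcd_nseq count_pow // prednK ?expn_gt0 ?hq //.
  have hjq : (j <= q * j)%N by rewrite leq_pmull.
  move: hlow hjq; rewrite size_nseq -/m -/L /j; clearbody L; lia.
-
  have hr1 : r != 1 by rewrite gt_eqF // ltr_pdivlMr // mul1r ltr_nat.
  have hy : \sum_(e <- nseq q m) r ^+ e = \sum_(e <- E0 p q b j) r ^+ e.
    by rewrite sum_nseq_rat E0_sum.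
  have hz := fact_of_list hat (allm q).
  have hz' := fact_of_list hat (E0_N p q j hb).
  rewrite -hy in hz'.
  have hain : r ^+ b \in map (fun e => r ^+ e) (E0 p q b j).
    by apply: map_f; apply: E0_b.
  have [z' [[hza hzs] ha hd]] := htb _ _ hz (ex_intro _ _ (conj hz' hain)).
  have [E hE] := fact_shape hr hza; subst z'.
  have hbE := mem_pow hr hr1 ha.
  rewrite big_map in hzs.
  have hnat := sum_eq_nat hq (all_le_K E m) (allK E q) hzs.
  rewrite sum_nseq_nat in hnat.
  have hlow := lower_gt cop hq hpq (all_le_K E m) (leq_addr _ _) hbE (ltn0Sn n) hnat.
  move: hd; rewrite /fact_dist map_nseq size_map.
  have -> : q = (q.-1).+1 by rewrite prednK.
  rewrite gcd_nseq prednK //.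
  move: hlow; lia.
- subst q; move: cop; rewrite /coprime gcdnn => /eqP; lia.
Qed.

Lemma rat_pq (r : rat) : 0 < r -> exists p q : nat,
  [/\ (0 < p)%N, (0 < q)%N, coprime p q & r = p%:R / q%:R].
Proof.
move=> hr.
exists `|numq r|%N, `|denq r|%N; split.
- by rewrite absz_gt0 numq_eq0 gt_eqF.
- by rewrite absz_gt0 denq_eq0.
- exact: coprime_num_den.
have hn : numq r = Posz `|numq r|%N by rewrite gtz0_abs // numq_gt0.
have hd : denq r = Posz `|denq r|%N by rewrite gtz0_abs // denq_gt0.
by rewrite -[r in LHS]divq_num_den hn hd.
Qed.

Lemma sum_nat (t : nat) s : \sum_(e <- s) (t%:R : rat) ^+ e = (\sum_(e <- s) t ^ e)%N%:R.
Proof.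
elim: s => [|e s IH]; first by rewrite !big_nil.
by rewrite !big_cons IH natrD natrX.
Qed.

Lemma sum_ones k : \sum_(a <- nseq k (1 : rat)) a = k%:R.
Proof. by elim: k => [|k IH]; rewrite ?big_nil // /= big_cons IH -natr1 addrC. Qed.

Lemma nat_glob (t : nat) (N : pred nat) : (0 \in N)%N -> globally_tame (exp_puiseux t%:R N).
Proof.
move=> h0.
have inM : forall u : nat, exp_puiseux t%:R N u%:R.
  move=> u; exists (nseq u 0%N); split; first by apply/allP => x /nseqP [-> _].
  by rewrite sum_nseq_rat expr0 mulr1.
have atom1 : forall a, is_atom (exp_puiseux t%:R N) a -> a = 1.
  move=> a [[s [_ ->]] hnz hsp].
  move: hnz hsp; rewrite sum_nat; case: (\sum_(e <- s) t ^ e)%N => [|u] //.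
  case: u => [|u] // _ hsp.
  have := hsp 1 u.+1%:R (inM 1%N) (inM _).
  case; first by rewrite -natr1 addrC.
  - by move/eqP; rewrite oner_eq0.
  - by move/eqP; rewrite pnatr_eq0.
exists 0%N => a ha y z [hza hzs] [z' [[hza' hzs'] haz']].
have ea := atom1 a ha; subst a.
have hz1 : z = nseq (size z) 1.
  by apply/all_pred1P/allP => x hx; apply/eqP/atom1/hza.
have hz1' : z' = nseq (size z') 1.
  by apply/all_pred1P/allP => x hx; apply/eqP/atom1/hza'.
have hs' : (0 < size z')%N by case: (z') haz'.
have : (size z)%:R = (size z')%:R :> rat.
  by rewrite -sum_ones -hz1 hzs -hzs' {1}hz1' sum_ones.
move/eqP; rewrite eqr_nat => /eqP hs.
exists z; split; first by split.
  by rewrite hz1 mem_nseq eqxx andbT hs.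
rewrite hz1 /fact_dist size_nseq.
case: (size z) hs => [|s] hs; first by rewrite -hs in hs'.
by rewrite gcd_nseq count_nseq /= ?eqxx ?mul1n maxnn minnn subnn.
Qed.

Lemma not_atomic (q : nat) (N : pred nat) : (2 <= q)%N -> numerical_monoid N ->
  ~ atomic (exp_puiseux (1%:R / q%:R) N).
Proof.
move=> hq2 [h0 _ [c hc]] hat.
set r : rat := 1%:R / q%:R.
have hq : (0 < q)%N by apply: leq_trans hq2.
have hqr : (0 : rat) < q%:R by rewrite ltr0n.
have hr : 0 < r by rewrite divr_gt0 // ltr0n.
have h1 : exp_puiseux r N 1 by exists [:: 0%N]; rewrite big_seq1 expr0 /= h0.
have [z [hza hzs]] := hat 1 h1 (oner_neq0 _).
case: z hza hzs => [|a z] hza hzs; first by move: hzs; rewrite big_nil => /eqP; rewrite eq_sym oner_eq0.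
have [k [hk ea]] := atom_shape hr (hza a (mem_head _ _)).
have [_ _ hsp] := hza a (mem_head _ _).
have hkc : (k + c.+1)%N \in N by apply: hc; rewrite addnS; apply: leqW; apply: leq_addl.
have hE : all (fun x => x \in N) (nseq (q ^ c.+1 - 1) (k + c.+1)) by apply/allP => x /nseqP [-> _].
have hqc : (1 <= q ^ c.+1 - 1)%N.
  have : (q <= q ^ c.+1)%N by rewrite expnS leq_pmulr // expn_gt0 hq.
  lia.
have hrq : r ^+ k = r ^+ (k + c.+1) + \sum_(e <- nseq (q ^ c.+1 - 1) (k + c.+1)) r ^+ e.
  rewrite sum_nseq_rat -[X in X + _]mul1r -mulrDl natrB; last by rewrite expn_gt0 hq.
  have hqr1 : q%:R * r = 1 by rewrite /r mulrC divfK ?gt_eqF.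
  by rewrite addrC subrK exprD mulrCA natrX -exprMn hqr1 expr1n mulr1.
have hor : r ^+ (k + c.+1) = 0 \/ \sum_(e <- nseq (q ^ c.+1 - 1) (k + c.+1)) r ^+ e = 0.
  apply: hsp; last by rewrite ea.
    by exists [:: (k + c.+1)%N]; rewrite big_seq1 /= hkc.
  by exists (nseq (q ^ c.+1 - 1) (k + c.+1)).
case: hor => h.
- by move: (exprn_gt0 (k + c.+1) hr); rewrite h ltxx.
- move: h; rewrite sum_nseq_rat => /eqP; rewrite mulf_eq0 pnatr_eq0 gt_eqF ?exprn_gt0 //=.
  by rewrite gt_eqF // exprn_gt0.
Qed.

Theorem mainTheorem16 (r : rat) (N : pred nat) :
  0 < r -> numerical_monoid N -> atomic (exp_puiseux r N) ->
  ((exists n : nat, r = n%:R) <-> locally_tame (exp_puiseux r N)) /\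
  (locally_tame (exp_puiseux r N) <-> globally_tame (exp_puiseux r N)).
Proof.
move=> hr hN hat.
have G2L : globally_tame (exp_puiseux r N) -> locally_tame (exp_puiseux r N).
  by case=> n hn a ha; exists n; apply: hn.
have N2G : (exists n : nat, r = n%:R) -> globally_tame (exp_puiseux r N).
  by case=> n ->; apply: nat_glob; case: hN.
have L2N : locally_tame (exp_puiseux r N) -> exists n : nat, r = n%:R.
  move=> hlt.
  have [p [q [hp hq cop er]]] := rat_pq hr.
  case: (q =P 1%N) => [eq1|hq1]; first by exists p; rewrite er eq1 divr1.
  have hq2 : (2 <= q)%N by case: (q) hq hq1 => [|[|q']].
  case: (p =P 1%N) => [ep1|hp1].
    by exfalso; subst r p; apply: (not_atomic hq2 hN hat).
  have hp2 : (2 <= p)%N by case: (p) hp hp1 => [|[|p']].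
  case: hN => h0 _ [b hb].
  exfalso; subst r.
  have [n hn] := hlt _ (atom_pow cop hp2 hq2 (hb b (leqnn b))).
  exact: (not_tame cop hp2 hq2 hb hn).
split; split => h.
- exact: G2L (N2G h).
- exact: L2N h.
- exact: N2G (L2N h).
- exact: G2L h.
Qed.
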